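(* The function $F_m$ is strictly decreasing on $(-\infty,0)$ and strictly increasing on $(0,\infty)$. In particular, the set of minimizers of $F_m$ over $\mathbb R$ is $\{0\}$.
   Context: Fix $m>1/2$. Let $c_m:=\left(\int_{\mathbb R}(1+x^2)^{-m}dx\right)^{-1}$ and $\nu_m(dx):=c_m(1+x^2)^{-m}dx$. Define $F_m(t):=\int_{\mathbb R}\log(1+(x-t)^2)\,\nu_m(dx)$ for $t\in\mathbb R$. *)

(* Defs.v *)
From HB Require Import structures.
From mathcomp Require Import all_boot all_order all_algebra.
From mathcomp Require Import all_classical all_reals all_analysis.
Set Implicit Arguments. Unset Strict Implicit. Unset Printing Implicit Defensive.
Import Order.TTheory GRing.Theory Num.Theory.
Import numFieldNormedType.Exports.
Local Open Scope classical_set_scope.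
Local Open Scope ring_scope.

Definition dens_m (R : realType) (m : R) (x : R) : R := (1 + x ^+ 2) `^ (- m).

Definition c_m (R : realType) (m : R) : R :=
  (\int[@lebesgue_measure R]_(x in [set: R]) dens_m m x)^-1.

Definition F_m (R : realType) (m : R) (t : R) : R :=
  \int[@lebesgue_measure R]_(x in [set: R])
     (ln (1 + (x - t) ^+ 2) * (c_m m * dens_m m x)).

(* Main.v *)
Require Import Defs.
From HB Require Import structures.
From mathcomp Require Import all_boot all_order all_algebra.
From mathcomp Require Import all_classical all_reals all_analysis.
From mathcomp Require Import ring lra.
From mathcomp Require Import measurable_realfun.
Import Order.TTheory GRing.Theory Num.Theory.
Import numFieldNormedType.Exports.
Local Open Scope classical_set_scope.
Local Open Scope ring_scope.
Set Implicit Arguments. Unset Strict Implicit. Unset Printing Implicit Defensive.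

Section A.
Variable R : realType.
Local Notation mu := (@lebesgue_measure R).

Lemma cont_powR (r a : R) : 0 < a -> {for a, continuous (@powR R ^~ r)}.
Proof.
move=> a0; apply: differentiable_continuous; apply/derivable1_diffP.
by have [] := is_derive1_powR r a0.
Qed.

Lemma powR_lim0 (q : R) : 0 < q -> (x + 1) `^ (- q) @[x --> +oo] --> (0:R).
Proof.
move=> q0; apply/cvgrPdist_lt => e e0.
near=> x.
have x0 : 0 < x by near: x; apply: nbhs_pinfty_gt; rewrite num_real.
have xb : (e^-1) `^ (q^-1) < x by near: x; apply: nbhs_pinfty_gt; rewrite num_real.
rewrite sub0r normrN ger0_norm ?powR_ge0// powRN.
rewrite -[e]invrK ltf_pV2 ?posrE ?invr_gt0 ?powR_gt0 ?ltr_wpDl ?ltW//.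
have h1 : e^-1 = ((e^-1) `^ (q^-1)) `^ q.
  by rewrite -powRrM mulVf ?gt_eqF// powRr1// invr_ge0 ltW.
rewrite h1; apply: gt0_ltr_powR => //; rewrite ?nnegrE ?powR_ge0 ?addr_ge0 ?ltW//.
by rewrite (lt_le_trans xb)// lerDl.
Unshelve. all: end_near. Qed.
Lemma is_der_F (q x : R) : 0 < q -> -1 < x ->
  is_derive x 1 (fun y => (- q^-1) * (y + 1) `^ (- q)) ((x + 1) `^ (- q - 1)).
Proof.
move=> q0 x1.
have hx : 0 < x + 1 by rewrite -ltrBlDr sub0r.
have h1 := is_derive1_powR (- q) hx.
have h2 : is_derive x 1 (shift 1 : R -> R) 1 := is_derive_shift x 1 1.
have h3 := @is_derive1_comp R _ (shift 1) x _ _ h1 h2.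
have h4 := is_deriveZ (- q^-1) h3.
have -> : (fun y => (- q^-1) * (y + 1) `^ (- q)) = (- q^-1) \*: ((@powR R ^~ (- q)) \o shift 1).
  by apply/funext => y.
suff -> : (x + 1) `^ (- q - 1) = (- q^-1 *: (- q * (x + 1) `^ (- q - 1) * 1)) by [].
by rewrite /GRing.scale/= mulr1 mulrA mulrNN mulVf ?gt_eqF// mul1r.
Qed.

Lemma tail_int (p : R) : 1 < p ->
  (\int[mu]_x ((`|x| + 1) `^ (- p))%:E < +oo)%E.
Proof.
move=> p1.
set h := fun x : R => (`|x| + 1) `^ (- p).
have hc : continuous h.
  move=> x; apply: (@continuous_comp _ _ _ (fun x : R => `|x| + 1) (@powR R ^~ (- p))).
    apply: continuousD; [exact: norm_continuous| exact: cst_continuous].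
  by apply: cont_powR; rewrite ltr_wpDl.
rewrite (@ge0_symfun_integralT _ h); last 3 first.
- by move=> x; apply: powR_ge0.
- exact: hc.
- by move=> x; rewrite /h /= normrN.
set q := p - 1.
have q0 : 0 < q by rewrite subr_gt0.
have pq : - p = - q - 1 by rewrite /q; lra.
set F := fun y : R => (- q^-1) * (y + 1) `^ (- q).
have dF (x : R) : 0 < x -> is_derive x 1 F (h x).
  move=> x0; rewrite /h gtr0_norm// pq; apply: is_der_F => //.
  by rewrite (lt_trans _ x0)// ltrN10.
have cF0 : {for 0, continuous F}.
  apply: differentiable_continuous; apply/derivable1_diffP.
  by have [] := is_der_F (x := 0) q0 (ltrN10 _).
rewrite -set_itvcy (@ge0_continuous_FTC2y _ h F 0 0).
- by rewrite -EFinB -EFinM ltry.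
- by move=> x _; apply: powR_ge0.
- exact: continuous_subspaceT.
- rewrite -(mulr0 (- q^-1)); apply: cvgMl_tmp; exact: powR_lim0.
- by move=> x x0; have [] := dF x x0.
- exact: cvg_at_right_filter.
- move=> x; rewrite in_itv/= andbT => x0.
  by rewrite derive1E; have [_ ->] := dF x x0.
Qed.
End A.

Section D.
Variable R : realType.
Local Notation mu := (@lebesgue_measure R).
Local Open Scope ereal_scope.

Lemma split_refl (f : R -> R) : (forall x, 0 <= f x)%R -> continuous f ->
  \int[mu]_x (f x)%:E = \int[mu]_(x in [set x | (0 <= x)%R]) (f x)%:E
     + \int[mu]_(x in [set x | (0 <= x)%R]) (f (- x)%R)%:E.
Proof.
move=> f0 cf.
have mf : measurable_fun [set: R] f by exact: continuous_measurable_fun.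
have mposnums : measurable [set x : R | 0 <= x]%R by rewrite -set_itvcy.
rewrite -(setUv [set x : R | 0 <= x]%R) ge0_integral_setU//= ; last 4 first.
  exact: measurableC.
  by apply/measurable_EFinP; rewrite setUv.
  by move=> x _; rewrite lee_fin.
  exact/disj_setPCl.
congr +%E.
rewrite -set_itvcy// setCitvr.
rewrite integral_itv_bndo_bndc; last exact/measurable_EFinP/measurable_funTS.
rewrite -{1}oppr0 ge0_integration_by_substitutionNy//.
exact: continuous_subspaceT.
Qed.

Lemma refl_int (f : R -> R) : (forall x, 0 <= f x)%R -> continuous f ->
  \int[mu]_x (f (- x)%R)%:E = \int[mu]_x (f x)%:E.
Proof.
move=> f0 cf.
rewrite (split_refl f0 cf) split_refl//; last first.
  move=> x; apply: (@continuous_comp _ _ _ -%R f); last exact: cf.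
  exact: opp_continuous.
rewrite addeC; congr +%E; apply: eq_integral => x _; by rewrite opprK.
Qed.

Lemma transl_int (f : R -> R) (a : R) : (forall x, 0 <= f x)%R -> continuous f ->
  \int[mu]_x (f (x + a)%R)%:E = \int[mu]_x (f x)%:E.
Proof.
move=> f0 cf.
have D1 : ((shift a : R -> R)^`())%classic = cst 1%R.
  apply/funext => z; rewrite derive1E; have [_ ->] := is_derive_shift z 1%R a; done.
rewrite (@increasing_ge0_integration_by_substitutionT _ (shift a) f); last 9 first.
- by move=> x y xy; rewrite /shift/= ltrD2r.
- by rewrite D1; exact: cst_continuous.
- by rewrite D1; exact: is_cvg_cst.
- by rewrite D1; exact: is_cvg_cst.
- by move=> x; have [] := is_derive_shift x 1%R a.
- apply/cvgrNyPle => r; near=> x.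
  rewrite /shift/= -lerBrDr; near: x; apply: nbhs_ninfty_le; exact: num_real.
- apply/cvgryPge => r; near=> x.
  rewrite /shift/= -lerBlDr; near: x; apply: nbhs_pinfty_ge; exact: num_real.
- exact: cf.
- exact: f0.
apply: eq_integral => x _; by rewrite D1 /= mulr1.
Unshelve. all: end_near. Qed.
End D.

Section E.
Variable R : realType.
Local Notation mu := (@lebesgue_measure R).
Local Open Scope ereal_scope.

Lemma pos_int (k : R -> R) (y0 : R) : (forall x, 0 <= k x)%R -> continuous k ->
  (0 < k y0)%R -> 0 < \int[mu]_x (k x)%:E.
Proof.
move=> k0 ck ky0.
have mk : measurable_fun [set: R] k by exact: continuous_measurable_fun.
have e0 : (0 < k y0 / 2)%R by rewrite divr_gt0.
have H := (cvgrPdist_lt _ _).1 (ck y0) _ e0.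
have [d /= d0 dB] := (nbhs_ballP _ _).1 (H _).
have mB : measurable (ball y0 d) by exact: measurable_ball.
apply: (@lt_le_trans _ _ (\int[mu]_(x in ball y0 d) (k y0 / 2)%:E)).
  rewrite integral_cst// [X in _ * X](_ : _ = (d *+ 2)%:E); last first.
    exact: lebesgue_measure_ball (ltW d0).
  by rewrite -EFinM lte_fin mulr_gt0// mulrn_wgt0.
apply: (@le_trans _ _ (\int[mu]_(x in ball y0 d) (k x)%:E)).
  apply: ge0_le_integral => //.
  - by move=> x _; rewrite lee_fin ltW.
  - by apply/measurable_EFinP; apply: measurable_funS mk.
  - move=> x /dB /=; rewrite lee_fin => h.
    move: h; rewrite ltr_norml => /andP[h1 h2]; apply/ltW; lra.
apply: ge0_subset_integral => //.
- by apply/measurable_EFinP.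
- by move=> x _; rewrite lee_fin.
Qed.
End E.

Section G.
Variable R : realType.

Lemma B1 (a x : R) : 0 < a ->
  (1 + x ^+ 2) `^ (- a) <= 2 `^ a * (`|x| + 1) `^ (- (2 * a)).
Proof.
move=> a0.
have w0 : 0 < 1 + x ^+ 2 by rewrite ltr_pwDl ?sqr_ge0.
have n0 : 0 < `|x| + 1 by rewrite ltr_wpDl.
rewrite !powRN.
have le1 : (`|x| + 1) `^ (2 * a) <= 2 `^ a * (1 + x ^+ 2) `^ a.
  rewrite powRrM powR_mulrn; last exact: ltW.
  rewrite -powRM; [|lra|exact: ltW].
  apply: ge0_ler_powR; rewrite ?nnegrE; [exact: ltW|exact: exprn_ge0 (ltW n0)| |].
    by rewrite mulr_ge0// ltW.
  have : `|x| ^+ 2 = x ^+ 2 by rewrite real_normK ?num_real.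
  have := normr_ge0 x.
  move=> h1 h2; rewrite -h2; have := sqr_ge0 (`|x| - 1); nra.
rewrite -[X in X <= _]mul1r ler_pdivrMr ?powR_gt0// mulrAC.
rewrite ler_pdivlMr ?powR_gt0// mul1r.
exact: le1.
Qed.

Lemma ln_le_pow (e z : R) : 0 < e -> 0 < z -> ln z <= e^-1 * z `^ e.
Proof.
move=> e0 z0.
have h : ln (z `^ e) = e * ln z by rewrite ln_powR.
have h2 := ln_sublinear (powR_gt0 e z0).
rewrite -(mulKf (lt0r_neq0 e0) (ln z)) -h ler_pM2l ?invr_gt0//.
exact: ltW.
Qed.

Lemma B2 (m t x : R) : 1/2 < m ->
  ln (1 + (x - t) ^+ 2) * (1 + x ^+ 2) `^ (- m) <=
  ((m / 2 - 1/4)^-1 * (2 * (1 + t ^+ 2)) `^ (m / 2 - 1/4) * 2 `^ (m / 2 + 1/4))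
   * (`|x| + 1) `^ (- (m + 1/2)).
Proof.
move=> m12.
set e := m / 2 - 1/4.
have e0 : 0 < e by rewrite /e; lra.
have w0 : 0 < 1 + x ^+ 2 by rewrite ltr_pwDl ?sqr_ge0.
have t0 : 0 < 1 + t ^+ 2 by rewrite ltr_pwDl ?sqr_ge0.
have z0 : 0 < 1 + (x - t) ^+ 2 by rewrite ltr_pwDl ?sqr_ge0.
have hz : 1 + (x - t) ^+ 2 <= 2 * (1 + t ^+ 2) * (1 + x ^+ 2).
  have := sqr_ge0 (x + t); have := sqr_ge0 (x * t); rewrite !expr2; nra.
have l1 : ln (1 + (x - t) ^+ 2) <= e^-1 * ((2 * (1 + t ^+ 2)) `^ e * (1 + x ^+ 2) `^ e).
  apply: (le_trans (ln_le_pow e0 z0)); rewrite ler_pM2l ?invr_gt0// -powRM; [|lra|exact: ltW].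
  apply: ge0_ler_powR; rewrite ?nnegrE; [exact: ltW|exact: ltW| |exact: hz].
  have := ltW t0; have := ltW w0; nra.
have pm : m / 2 + 1/4 = m - e by rewrite /e; lra.
have pp : - (m + 1/2) = - (2 * (m - e)) by rewrite /e; lra.
have l2 : (1 + x ^+ 2) `^ e * (1 + x ^+ 2) `^ (- m) = (1 + x ^+ 2) `^ (- (m - e)).
  rewrite -powRD; first by rewrite opprB. by rewrite (gt_eqF w0) implybT.
apply: (le_trans (ler_wpM2r (powR_ge0 _ _) l1)).
rewrite -!mulrA ler_pM2l ?invr_gt0// ler_pM2l; last by apply: powR_gt0; lra.
rewrite l2 pm pp; apply: B1; rewrite /e; lra.
Qed.

End G.


Section M.
Variable R : realType.
Local Notation mu := (@lebesgue_measure R).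
Variable m : R.
Hypothesis hm : 1 / 2 < m.

Let m0 : 0 < m. Proof. by rewrite (lt_trans _ hm)// divr_gt0. Qed.

Lemma cont_sq1 (t : R) : continuous (fun x : R => 1 + (x - t) ^+ 2).
Proof.
have -> : (fun x : R => 1 + (x - t) ^+ 2) =
    (cst 1) + ((fun x => x - t) \* (fun x => x - t)).
  by apply/funext => y; rewrite /= expr2.
have cB : continuous (fun x : R => x - t).
  by move=> y; apply: continuousB; [exact: cvg_id| exact: cvg_cst].
move=> x; apply: continuousD; first exact: cst_continuous.
by apply: continuousM; apply: cB.
Qed.

Lemma cont_dens : continuous (dens_m m).
Proof.
move=> x; rewrite /dens_m.
apply: (@continuous_comp _ _ _ (fun x : R => 1 + x ^+ 2) (@powR R ^~ (- m))).
  by have := @cont_sq1 0 x; under eq_fun do rewrite subr0.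
by apply: cont_powR; rewrite ltr_pwDl ?sqr_ge0.
Qed.

Lemma dens_ge0 x : 0 <= dens_m m x. Proof. exact: powR_ge0. Qed.

Lemma dom_fin (f h : R -> R) (K : R) : (forall x, 0 <= f x) -> continuous f ->
  (forall x, 0 <= h x) -> continuous h -> 0 <= K -> (forall x, f x <= K * h x) ->
  (\int[mu]_x (h x)%:E < +oo)%E -> (\int[mu]_x (f x)%:E < +oo)%E.
Proof.
move=> f0 cf h0 ch K0 fh hfin.
have mh : measurable_fun [set: R] h by exact: continuous_measurable_fun.
apply: (@le_lt_trans _ _ (\int[mu]_x (K%:E * (h x)%:E))%E).
  apply: ge0_le_integral => //.
  - by move=> x _; rewrite lee_fin.
  - apply/measurable_EFinP; exact: continuous_measurable_fun.
  - by apply: emeasurable_funM => //; apply/measurable_EFinP.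
  - by move=> x _; rewrite -EFinM lee_fin.
rewrite ge0_integralZl_EFin//.
- have hp : (0 <= \int[mu]_x (h x)%:E)%E by apply: integral_ge0 => x _; rewrite lee_fin.
  rewrite ltey_eq fin_numM//; last by rewrite ge0_fin_numE.
- by move=> x _; rewrite lee_fin.
- exact/measurable_EFinP.
Qed.


Lemma int_dens_fin : (\int[mu]_x (dens_m m x)%:E < +oo)%E.
Proof.
apply: (@dom_fin _ (fun x => (`|x| + 1) `^ (- (2 * m))) (2 `^ m)).
- exact: dens_ge0.
- exact: cont_dens.
- by move=> x; apply: powR_ge0.
- move=> x; apply: (@continuous_comp _ _ _ (fun x : R => `|x| + 1) (@powR R ^~ _)).
    apply: continuousD; [exact: norm_continuous| exact: cst_continuous].
  by apply: cont_powR; rewrite ltr_wpDl.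
- exact: powR_ge0.
- by move=> x; apply: B1.
- by apply: tail_int; have := hm; lra.
Qed.

Lemma int_dens_pos : (0 < \int[mu]_x (dens_m m x)%:E)%E.
Proof.
apply: (@pos_int _ _ 0); [exact: dens_ge0|exact: cont_dens|].
by rewrite /dens_m expr0n/= addr0 powR1.
Qed.

Lemma c_pos : 0 < c_m m.
Proof.
rewrite /c_m invr_gt0 /Rintegral.
have h1 := int_dens_fin; have h2 := int_dens_pos.
rewrite -lte_fin fineK//; by rewrite ge0_fin_numE// ltW.
Qed.

Definition V (x : R) := c_m m * dens_m m x.
Definition L (u : R) := ln (1 + u ^+ 2).
Definition g (t x : R) := L (x - t) * V x.

Lemma F_g t : F_m m t = fine (\int[mu]_x (g t x)%:E).
Proof. by []. Qed.

Lemma L_ge0 u : 0 <= L u.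
Proof. by apply: ln_ge0; rewrite lerDl sqr_ge0. Qed.

Lemma V_ge0 x : 0 <= V x.
Proof. by rewrite /V mulr_ge0 ?dens_ge0// ltW// c_pos. Qed.

Lemma g_ge0 t x : 0 <= g t x.
Proof. by rewrite /g mulr_ge0 ?L_ge0 ?V_ge0. Qed.

Lemma cont_V : continuous V.
Proof.
move=> x; apply: (@continuousM _ _ (cst (c_m m)) (dens_m m)).
  exact: cst_continuous.
exact: cont_dens.
Qed.

Lemma cont_g t : continuous (g t).
Proof.
move=> x; apply: (@continuousM _ _ (fun x => L (x - t)) V); last exact: cont_V.
apply: (@continuous_comp _ _ _ (fun x : R => 1 + (x - t) ^+ 2) (@ln R)).
  exact: cont_sq1.
by apply: continuous_ln; rewrite ltr_pwDl ?sqr_ge0.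
Qed.

Lemma g_fin t : (\int[mu]_x (g t x)%:E < +oo)%E.
Proof.
apply: (@dom_fin _ (fun x => (`|x| + 1) `^ (- (m + 1/2)))
  (c_m m * ((m / 2 - 1/4)^-1 * (2 * (1 + t ^+ 2)) `^ (m / 2 - 1/4) * 2 `^ (m / 2 + 1/4)))).
- exact: g_ge0.
- exact: cont_g.
- by move=> x; apply: powR_ge0.
- move=> x; apply: (@continuous_comp _ _ _ (fun x : R => `|x| + 1) (@powR R ^~ _)).
    apply: continuousD; [exact: norm_continuous| exact: cst_continuous].
  by apply: cont_powR; rewrite ltr_wpDl.
- have e0 : 0 <= (m / 2 - 1/4)^-1 by rewrite invr_ge0; have := hm; lra.
  have := c_pos; have := powR_ge0 (2 * (1 + t ^+ 2)) (m / 2 - 1 / 4).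
  have := powR_ge0 2 (m / 2 + 1 / 4).
  move=> *; apply: mulr_ge0; [exact: ltW|]; apply: mulr_ge0 => //; exact: mulr_ge0.
- move=> x; rewrite /g /V /L mulrCA -mulrA ler_pM2l ?c_pos//.
  exact: B2.
- by apply: tail_int; have := hm; lra.
Qed.

Lemma cont_L (c : R) : continuous (fun x => L (x - c)).
Proof.
move=> x; apply: (@continuous_comp _ _ _ (fun x : R => 1 + (x - c) ^+ 2) (@ln R)).
  exact: cont_sq1.
by apply: continuous_ln; rewrite ltr_pwDl ?sqr_ge0.
Qed.

Lemma cont_shift (f : R -> R) (a : R) : continuous f -> continuous (fun x => f (x + a)).
Proof.
move=> cf x; apply: (@continuous_comp _ _ _ (fun x : R => x + a) f); last exact: cf.
by apply: continuousD; [exact: cvg_id| exact: cvg_cst].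
Qed.

Lemma cont_refl (f : R -> R) (a : R) : continuous f -> continuous (fun x => f (a - x)).
Proof.
move=> cf x; apply: (@continuous_comp _ _ _ (fun x : R => a - x) f); last exact: cf.
by apply: continuousB; [exact: cvg_cst| exact: cvg_id].
Qed.

Lemma L_opp u : L (- u) = L u.
Proof. by rewrite /L sqrrN. Qed.

Lemma V_opp u : V (- u) = V u.
Proof. by rewrite /V /dens_m sqrrN. Qed.

Lemma L_le u1 u2 : u1 ^+ 2 <= u2 ^+ 2 -> L u1 <= L u2.
Proof.
move=> h; rewrite /L ler_ln ?posrE ?ltr_pwDl ?sqr_ge0// lerD2l; exact: h.
Qed.

Lemma L_lt u1 u2 : u1 ^+ 2 < u2 ^+ 2 -> L u1 < L u2.
Proof.
move=> h; have p1 : 0 < 1 + u1 ^+ 2 by rewrite ltr_pwDl ?sqr_ge0.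
have p2 : 0 < 1 + u2 ^+ 2 by rewrite ltr_pwDl ?sqr_ge0.
by rewrite /L ltr_ln ?posrE// ltrD2l.
Qed.

Lemma V_le u1 u2 : u1 ^+ 2 <= u2 ^+ 2 -> V u2 <= V u1.
Proof.
move=> h; rewrite /V ler_pM2l ?c_pos// /dens_m !powRN.
have p1 : 0 < 1 + u1 ^+ 2 by rewrite ltr_pwDl ?sqr_ge0.
have p2 : 0 < 1 + u2 ^+ 2 by rewrite ltr_pwDl ?sqr_ge0.
rewrite lef_pV2 ?posrE ?powR_gt0//.
apply: ge0_ler_powR; [exact: ltW m0|by rewrite nnegrE ltW|by rewrite nnegrE ltW|].
by rewrite lerD2l.
Qed.

Lemma V_lt u1 u2 : u1 ^+ 2 < u2 ^+ 2 -> V u2 < V u1.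
Proof.
move=> h; rewrite /V ltr_pM2l ?c_pos// /dens_m !powRN.
have p1 : 0 < 1 + u1 ^+ 2 by rewrite ltr_pwDl ?sqr_ge0.
have p2 : 0 < 1 + u2 ^+ 2 by rewrite ltr_pwDl ?sqr_ge0.
rewrite ltf_pV2 ?posrE ?powR_gt0//.
apply: gt0_ltr_powR; [exact: m0|by rewrite nnegrE ltW|by rewrite nnegrE ltW|].
by rewrite ltrD2l.
Qed.

Lemma g_sym t : (\int[mu]_x (g (- t) x)%:E = \int[mu]_x (g t x)%:E)%E.
Proof.
rewrite -(@refl_int _ (g t)); [|exact: g_ge0|exact: cont_g].
apply: eq_integral => x _; congr EFin.
by rewrite /g V_opp -L_opp; congr (L _ * _); ring.
Qed.

Lemma strict s t : 0 <= s -> s < t ->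
  (\int[mu]_x (g s x)%:E < \int[mu]_x (g t x)%:E)%E.
Proof.
move=> s0 st.
set σ := s + t.
have reflσ (f : R -> R) : (forall x, 0 <= f x) -> continuous f ->
    (\int[mu]_x (f (σ - x))%:E = \int[mu]_x (f x)%:E)%E.
  move=> f0 cf.
  rewrite -[RHS](@transl_int _ f σ)//.
  rewrite -(@refl_int _ (fun y => f (y + σ))) //; last exact: cont_shift.
  by apply: eq_integral => x _; rewrite addrC.
set k := fun x => (L (x - t) - L (x - s)) * (V x - V (σ - x)).
have kE x : g t x + g t (σ - x) = k x + (g s x + g s (σ - x)).
  have e1 : σ - x - t = - (x - s) by rewrite /σ; ring.
  have e2 : σ - x - s = - (x - t) by rewrite /σ; ring.
  rewrite /g e1 e2 !L_opp /k; ring.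
have k0 x : 0 <= k x.
  rewrite /k; case: (leP (2 * x) σ) => hx.
  - apply: mulr_ge0; rewrite subr_ge0.
      apply: L_le; rewrite /σ in hx; rewrite !expr2.
      have : 0 <= (t - s) * (s + t - 2 * x) by apply: mulr_ge0; lra.
      nra.
    apply: V_le; rewrite /σ in hx *; rewrite !expr2.
    have : 0 <= (s + t) * (s + t - 2 * x) by apply: mulr_ge0; lra.
    nra.
  - apply: mulr_le0; rewrite subr_le0.
      apply: L_le; rewrite /σ in hx; rewrite !expr2.
      have : 0 <= (t - s) * (2 * x - (s + t)) by apply: mulr_ge0; lra.
      nra.
    apply: V_le; rewrite /σ in hx *; rewrite !expr2.
    have : 0 <= (s + t) * (2 * x - (s + t)) by apply: mulr_ge0; lra.
    nra.
have kpos : 0 < k (s - 1).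
  rewrite /k; apply: mulr_gt0; rewrite subr_gt0.
    apply: L_lt; rewrite !expr2.
    have : 0 < (t - s) * (t - s + 2) by apply: mulr_gt0; lra.
    nra.
  apply: V_lt; rewrite /σ !expr2.
  have : 0 < (t + 2 - s) * (t + s) by apply: mulr_gt0; lra.
  nra.
have ck : continuous k.
  move=> x; apply: (@continuousM _ _ (fun x => L (x - t) - L (x - s)) (fun x => V x - V (σ - x))).
    by apply: (@continuousB _ _ _ (fun x => L (x - t)) (fun x => L (x - s))); apply: cont_L.
  apply: (@continuousB _ _ _ V (fun x => V (σ - x))); [exact: cont_V| exact: (cont_refl (a:=σ) cont_V)].
have mes (f : R -> R) : continuous f -> measurable_fun [set: R] (fun x => (f x)%:E).
  by move=> cf; apply/measurable_EFinP; exact: continuous_measurable_fun.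
have cgr (u : R) : continuous (fun x => g u (σ - x)).
  move=> x; apply: (@continuous_comp _ _ _ (fun x : R => σ - x) (g u)); last exact: cont_g.
  by apply: continuousB; [exact: cvg_cst| exact: cvg_id].
have E : (\int[mu]_x (g t x)%:E + \int[mu]_x (g t x)%:E =
   \int[mu]_x (k x)%:E + (\int[mu]_x (g s x)%:E + \int[mu]_x (g s x)%:E))%E.
  rewrite -{2}(reflσ (g t)); [|exact: g_ge0|exact: cont_g].
  rewrite -{2}(reflσ (g s)); [|exact: g_ge0|exact: cont_g].
  rewrite -ge0_integralD//; last 4 first.
  - by move=> x _; rewrite lee_fin g_ge0.
  - apply/measurable_EFinP; apply: continuous_measurable_fun. move=> y; exact: cont_g.
  - by move=> x _; rewrite lee_fin g_ge0.
  - apply/measurable_EFinP; apply: continuous_measurable_fun => y; exact: cgr.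
  rewrite -ge0_integralD//; last 4 first.
  - by move=> x _; rewrite lee_fin g_ge0.
  - apply/measurable_EFinP; apply: continuous_measurable_fun => y; exact: cont_g.
  - by move=> x _; rewrite lee_fin g_ge0.
  - apply/measurable_EFinP; apply: continuous_measurable_fun => y; exact: cgr.
  rewrite -ge0_integralD//; last 4 first.
  - by move=> x _; rewrite lee_fin.
  - apply/measurable_EFinP; apply: continuous_measurable_fun => y; exact: ck.
  - by move=> x _; rewrite -EFinD lee_fin addr_ge0 ?g_ge0.
  - under eq_fun do rewrite -EFinD.
    apply/measurable_EFinP; apply: continuous_measurable_fun.
    move=> x; apply: (@continuousD _ _ _ (g s) (fun x => g s (σ - x))); [exact: cont_g|exact: cgr].
  by apply: eq_integral => x _; rewrite -!EFinD kE.
have Kpos := @pos_int _ k (s - 1) k0 ck kpos.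
have fa : (\int[mu]_x (g t x)%:E)%E \is a fin_num.
  by rewrite ge0_fin_numE ?g_fin// integral_ge0// => x _; rewrite lee_fin g_ge0.
have fb : (\int[mu]_x (g s x)%:E)%E \is a fin_num.
  by rewrite ge0_fin_numE ?g_fin// integral_ge0// => x _; rewrite lee_fin g_ge0.
move: E Kpos; rewrite -(fineK fa) -(fineK fb).
case: (\int[mu]_x (k x)%:E)%E => [r| |] //.
rewrite -!EFinD !lte_fin => EE r0; have := EFin_inj EE; lra.
Qed.

End M.

Unset Implicit Arguments.

Theorem lemma2p5 (R : realType) (m : R) (hm : 1 / 2 < m) :
  (forall s t : R, s < t -> t < 0 -> F_m m t < F_m m s) /\
  (forall s t : R, 0 < s -> s < t -> F_m m s < F_m m t) /\
  [set t : R | forall u : R, F_m m t <= F_m m u] = [set 0].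
Proof.
have Fsym t : F_m m (- t) = F_m m t by rewrite !F_g (g_sym hm).
have fin t : (\int[lebesgue_measure]_x (g m t x)%:E)%E \is a fin_num.
  rewrite ge0_fin_numE ?(g_fin hm)// integral_ge0// => x _.
  by rewrite lee_fin (g_ge0 hm).
have Flt s t : 0 <= s -> s < t -> F_m m s < F_m m t.
  by move=> s0 st; rewrite !F_g; apply: fine_lt; [exact: fin|exact: fin|exact: strict].
split.
  by move=> s t st t0; rewrite -(Fsym t) -(Fsym s); apply: Flt; lra.
split.
  by move=> s t s0 st; apply: Flt => //; exact: ltW.
apply/seteqP; split => x /=.
  move=> H; case: (ltgtP x 0) => // hx.
    have := H 0; rewrite -Fsym; have := Flt 0 (- x) (lexx _).
    by rewrite oppr_gt0 => /(_ hx) h1 h2; move: (lt_le_trans h1 h2); rewrite ltxx.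
  have := H 0; have := Flt 0 x (lexx _) hx.
  by move=> h1 h2; move: (lt_le_trans h1 h2); rewrite ltxx.
move=> -> u; case: (ltgtP u 0) => hu.
- by rewrite -(Fsym u); apply/ltW/Flt; lra.
- by apply/ltW/Flt.
- by rewrite hu.
Qed.
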